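(* Let $X$ be a non-empty recognizable subset of $Z^*$. Then for every integer $p > 0$ there exists $\sigma \in X$ with $|\sigma| > p$.
   Context: $Z^*$ is the commutative group of finite sequences of integers whose last entry is non-zero (including the empty sequence), with pointwise addition (shorter sequence padded by zeros) and the empty sequence as unit; equivalently the free abelian group on countably many generators, isomorphic to $(\mathbb{Q}_{>0},\times,1)$ via exponents of prime factorizations. For $\sigma\in Z^*$, $|\sigma|$ is its length, i.e. the smallest $n_0$ such that $\sigma(n)=0$ for all $n>n_0$. A subset $S$ of a monoid $M$ is recognizable if there exist a finite monoid $N$, a monoid morphism $\varphi\colon M \to N$ and a subset $T \subseteq N$ with $S = \varphi^{-1}(T)$. *)

(* Defs.v *)
From mathcomp Require Import all_boot all_order all_algebra.
Set Implicit Arguments. Unset Strict Implicit. Unset Printing Implicit Defensive.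
Import GRing.Theory.
Local Open Scope ring_scope.

(* Z^* : finite sequences of integers whose last entry is non-zero
   (including the empty sequence), with pointwise addition (shorter sequence
   padded by zeros), then trailing zeros removed. *)

Fixpoint trim (s : seq int) : seq int :=
  match s with
  | [::] => [::]
  | x :: s' => let t := trim s' in
               if (t == [::]) && (x == 0) then [::] else x :: t
  end.

Definition canon (s : seq int) : bool := (s == [::]) || (last 0 s != 0).

Definition Zstar := {s : seq int | canon s}.

Definition zseq (x : Zstar) : seq int := sval x.

Definition zlen (x : Zstar) : nat := size (zseq x).

Lemma canon_trim s : canon (trim s).
Proof.
rewrite /canon; elim: s => [|x s IH] //=.
move: IH; case: (trim s) => [|y t] /= IH //.
by case: (boolP (x == 0)) => //= ->.
Qed.

Definition zmk (s : seq int) : Zstar := exist _ (trim s) (canon_trim s).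

Definition zzero : Zstar := exist _ [::] (erefl true).

Definition zadd (x y : Zstar) : Zstar :=
  zmk (mkseq (fun i => nth 0 (zseq x) i + nth 0 (zseq y) i)
             (maxn (size (zseq x)) (size (zseq y)))).

Definition recognizable (S : Zstar -> Prop) : Prop :=
  exists (N : finType) (op : N -> N -> N) (e : N),
    (forall a b c, op a (op b c) = op (op a b) c) /\
    (forall a, op e a = a) /\ (forall a, op a e = a) /\
    exists (phi : Zstar -> N),
      phi zzero = e /\
      (forall x y, phi (zadd x y) = op (phi x) (phi y)) /\
      exists (T : pred N), forall x, S x <-> T (phi x).

(* Main.v *)
Require Import Defs.
From mathcomp Require Import all_boot all_order all_algebra.
Set Implicit Arguments. Unset Strict Implicit. Unset Printing Implicit Defensive.
Import GRing.Theory.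
Local Open Scope ring_scope.

Lemma trim_nth s i : nth 0 (trim s) i = nth 0 s i.
Proof.
elim: s i => [|x s IH] i //=.
case: ifP => [/andP[/eqP E /eqP ->]|_].
  case: i => [|i] //=. by rewrite -IH E nth_nil.
by case: i.
Qed.

Lemma trim_zero t : (forall i, nth 0 t i = 0) -> trim t = [::].
Proof.
elim: t => [|y t IH] //= H.
have := H 0%N => /= ->.
rewrite IH //= => i; exact: (H i.+1).
Qed.

Lemma trim_ext s t : (forall i, nth 0 s i = nth 0 t i) -> trim s = trim t.
Proof.
elim: s t => [|x s IH] t H.
  by rewrite (trim_zero (t:=t)) // => i; rewrite -H nth_nil.
case: t H => [|y t] H.
  by rewrite trim_zero // => i; rewrite H nth_nil.
have := H 0%N => /= ->.
by rewrite (IH t) // => i; exact: (H i.+1).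
Qed.

Lemma trim_canon s : canon s -> trim s = s.
Proof.
elim: s => [|x s IH] //= Hc.
case: s IH Hc => [|y s] IH Hc.
  by rewrite /canon /= in Hc; rewrite /= (negbTE Hc).
rewrite IH //.
Qed.

Lemma zeq (x y : Zstar) : (forall i, nth 0 (zseq x) i = nth 0 (zseq y) i) -> x = y.
Proof.
case: x => s Hs; case: y => t Ht /= H.
have E : s = t by rewrite -(trim_canon Hs) -(trim_canon Ht); apply: trim_ext.
subst t; congr exist; exact: eq_irrelevance.
Qed.

Lemma zadd_nth x y i : nth 0 (zseq (zadd x y)) i = nth 0 (zseq x) i + nth 0 (zseq y) i.
Proof.
rewrite /zadd /zmk /zseq /= trim_nth; case: (ltnP i (maxn (size (sval x)) (size (sval y)))) => Hi.
  by rewrite nth_mkseq.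
rewrite nth_default ?size_mkseq // !nth_default ?addr0 //; apply: leq_trans Hi; by rewrite ?leq_maxl ?leq_maxr.
Qed.

Section E.
Variable k : nat.
Definition E (c : int) : Zstar := zmk (rcons (nseq k 0) c).
Lemma E_nth c i : nth 0 (zseq (E c)) i = if i == k then c else 0.
Proof.
rewrite /E /zmk /zseq /= trim_nth nth_rcons size_nseq nth_nseq.
case: ltngtP => //; by rewrite if_same.
Qed.
Lemma E_add a b : zadd (E a) (E b) = E (a + b).
Proof. apply: zeq => i; rewrite zadd_nth !E_nth; case: eqP => //; by rewrite addr0. Qed.
Lemma E0 : E 0 = zzero.
Proof. apply: zeq => i; rewrite E_nth nth_nil; by case: eqP. Qed.
End E.

Theorem proposition7 (X : Zstar -> Prop) :
  recognizable X -> (exists x, X x) ->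
  forall p : nat, (0 < p)%N -> exists sigma, X sigma /\ (p < zlen sigma)%N.
Proof.
move=> [N [op [e [opA [op1 [opr [phi [phie [phiM [T HT]]]]]]]]]] [x Hx] p _.
set k := maxn p (zlen x).
pose f (n : nat) := phi (E k n%:Z).
have fD m n : f (m + n)%N = op (f m) (f n) by rewrite /f -phiM E_add PoszD.
have inv n : op (phi (E k (- n%:Z))) (f n) = e by rewrite /f -phiM E_add addNr E0 phie.
have [m [m0 fm]] : exists m, (0 < m)%N /\ f m = e.
  pose g (i : 'I_(#|N|.+1)) := f i.
  have : ~~ injectiveb g.
    apply/negP => /injectiveP inj; have := leq_card g inj; by rewrite card_ord ltnn.
  move/injectivePn => [i0 [j0 nij gij]].
  have [i [j [ij fij]]] : exists i j : nat, (i < j)%N /\ f i = f j.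
    case: (ltngtP i0 j0) => H.
    - by exists i0, j0.
    - by exists j0, i0.
    - by move: nij; rewrite -(inj_eq val_inj) /= H eqxx.
  exists (j - i)%N; split; first by rewrite subn_gt0.
  have := inv i; rewrite fij -{1}(subnKC (ltnW ij)) fD opA inv op1.
  by [].
exists (zadd x (E k m)); split.
  by apply/HT; rewrite phiM; change (T (op (phi x) (f m))); rewrite fm opr; apply/HT.
have Hk : nth 0 (zseq (zadd x (E k m))) k != 0.
  rewrite zadd_nth E_nth eqxx nth_default ?add0r //; last by rewrite /k leq_maxr.
  by rewrite eqz_nat -lt0n.
rewrite /zlen; apply: (leq_trans (_ : p < k.+1)%N); first by rewrite ltnS leq_maxl.
by rewrite ltnNge; apply: contra Hk => /(nth_default 0) ->.
Qed.
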